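(* Let $ABC$ be a triangle with incenter $I$, and let $H_A, H_B, H_C$ be the orthocenters of the triangles $BIC$, $CIA$, $AIB$ respectively. Then the triangles $AH_BH_C$, $BH_CH_A$, $CH_AH_B$ have a common orthocenter, namely the Nagel point $N_a$ of $ABC$.
   Context: The Nagel point of $ABC$ is the common point of the lines joining each vertex to the point where the excircle opposite that vertex touches the opposite side. *)

(* Defs.v *)
From mathcomp Require Import all_boot all_order all_algebra.
Set Implicit Arguments. Unset Strict Implicit. Unset Printing Implicit Defensive.
Import Order.TTheory GRing.Theory Num.Theory.
Local Open Scope ring_scope.

Section Geom.
Variable R : realFieldType.
Definition point := (R * R)%type.

Definition vsub (P Q : point) : point := (P.1 - Q.1, P.2 - Q.2).
Definition dot (u v : point) : R := u.1 * v.1 + u.2 * v.2.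
Definition cross (u v : point) : R := u.1 * v.2 - u.2 * v.1.

(* (signed, doubled) area orientation of P Q X *)
Definition orient (P Q X : point) : R := cross (vsub Q P) (vsub X P).

Definition collinear (P Q X : point) : Prop := orient P Q X = 0.
Definition triangle (A B C : point) : Prop := ~ collinear A B C.

(* X lies on the line through P and Q (P <> Q assumed where used) *)
Definition on_line (X P Q : point) : Prop := orient P Q X = 0.

Definition strictly_inside (X A B C : point) : Prop :=
  0 < orient A B X * orient A B C /\
  0 < orient B C X * orient B C A /\
  0 < orient C A X * orient C A B.

(* Circle with center J and radius r > 0 is tangent to the line PQ:
   the distance from J to line PQ equals r (written without square roots:
   dist^2 = orient^2 / |PQ|^2). *)
Definition tangent_line (J : point) (r : R) (P Q : point) : Prop :=
  (orient P Q J) ^+ 2 = r ^+ 2 * dot (vsub Q P) (vsub Q P).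

Definition incenter (I A B C : point) : Prop :=
  strictly_inside I A B C /\
  exists r : R, 0 < r /\ tangent_line I r B C /\ tangent_line I r C A
                      /\ tangent_line I r A B.

Definition excircle_opp (J : point) (r : R) (A B C : point) : Prop :=
  0 < r /\ tangent_line J r B C /\ tangent_line J r A B /\
  tangent_line J r A C /\ orient B C J * orient B C A < 0.

Definition touch_point (T J B C : point) : Prop :=
  on_line T B C /\ dot (vsub T J) (vsub C B) = 0.

Definition orthocenter (H P Q X : point) : Prop :=
  dot (vsub H P) (vsub X Q) = 0 /\
  dot (vsub H Q) (vsub P X) = 0 /\
  dot (vsub H X) (vsub Q P) = 0.

End Geom.

(* Main.v *)
Require Import Defs.
From mathcomp Require Import all_boot all_order all_algebra.
From mathcomp Require Import ring lra.
Set Implicit Arguments. Unset Strict Implicit. Unset Printing Implicit Defensive.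
Import Order.TTheory GRing.Theory Num.Theory.
Local Open Scope ring_scope.
Section H.
Variable R : realFieldType.
Implicit Types (A B C P Q X U V H J T : point R).

Definition comb A B C (p q : R) : point R :=
  (A.1 + p * (B.1 - A.1) + q * (C.1 - A.1), A.2 + p * (B.2 - A.2) + q * (C.2 - A.2)).

Definition lens A B C (la lb lc : R) :=
  0 < la /\ 0 < lb /\ 0 < lc /\ la ^+ 2 = dot (vsub C B) (vsub C B) /\
      lb ^+ 2 = dot (vsub A C) (vsub A C) /\ lc ^+ 2 = dot (vsub B A) (vsub B A).

Ltac crunch := rewrite /orient /cross /vsub /dot /comb /=; ring.

Lemma combA A B C : comb A B C 0 0 = A.
Proof. by move: A B C => [a1 a2] [b1 b2] [c1 c2]; rewrite /comb /=; congr (_, _); ring. Qed.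
Lemma combB A B C : comb A B C 1 0 = B.
Proof. by move: A B C => [a1 a2] [b1 b2] [c1 c2]; rewrite /comb /=; congr (_, _); ring. Qed.
Lemma combC A B C : comb A B C 0 1 = C.
Proof. by move: A B C => [a1 a2] [b1 b2] [c1 c2]; rewrite /comb /=; congr (_, _); ring. Qed.
Lemma comb_rot A B C p q : comb B C A p q = comb A B C (1 - p - q) p.
Proof. by move: A B C => [a1 a2] [b1 b2] [c1 c2]; rewrite /comb /=; congr (_, _); ring. Qed.
Lemma orient_rot A B C : orient B C A = orient A B C.
Proof. crunch. Qed.
Lemma lens_rot A B C la lb lc : lens A B C la lb lc -> lens B C A lb lc la.
Proof. by case=> ? [? [? [? [? ?]]]]; do !split. Qed.

Lemma pt_comb A B C P : orient A B C != 0 ->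
  P = comb A B C (orient C A P / orient A B C) (orient A B P / orient A B C).
Proof.
move: A B C P => [a1 a2] [b1 b2] [c1 c2] [p1 p2].
rewrite /orient /cross /vsub /comb /= => h.
congr (_, _); field; exact: h.
Qed.

Lemma cross4 A B C p1 q1 p2 q2 p3 q3 p4 q4 :
  cross (vsub (comb A B C p1 q1) (comb A B C p2 q2)) (vsub (comb A B C p3 q3) (comb A B C p4 q4))
  = ((p1 - p2) * (q3 - q4) - (q1 - q2) * (p3 - p4)) * orient A B C.
Proof. crunch. Qed.

Lemma orient3 A B C p1 q1 p2 q2 p3 q3 :
  orient (comb A B C p1 q1) (comb A B C p2 q2) (comb A B C p3 q3)
  = ((p2 - p1) * (q3 - q1) - (q2 - q1) * (p3 - p1)) * orient A B C.
Proof. crunch. Qed.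

Lemma gramL A B C la lb lc p1 q1 p2 q2 p3 q3 p4 q4 : lens A B C la lb lc ->
  dot (vsub (comb A B C p1 q1) (comb A B C p2 q2)) (vsub (comb A B C p3 q3) (comb A B C p4 q4))
  = (p1 - p2) * (p3 - p4) * lc ^+ 2
    + ((p1 - p2) * (q3 - q4) + (q1 - q2) * (p3 - p4)) * ((lb ^+ 2 + lc ^+ 2 - la ^+ 2) / 2)
    + (q1 - q2) * (q3 - q4) * lb ^+ 2.
Proof.
case=> _ [_ [_ [-> [-> ->]]]].
move: A B C => [a1 a2] [b1 b2] [c1 c2]; rewrite /vsub /dot /comb /=; field; by [].
Qed.

Lemma tri_ineq A B C la lb lc : lens A B C la lb lc -> orient A B C != 0 -> la < lb + lc.
Proof.
case=> la0 [lb0 [lc0 [ha [hb hc]]]] hD.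
set bc := dot (vsub B A) (vsub C A).
have h1 : (lb * lc) ^+ 2 = bc ^+ 2 + (orient A B C) ^+ 2.
  by rewrite exprMn hb hc /bc; crunch.
have h2 : 0 < (orient A B C) ^+ 2 by rewrite lt_def sqrf_eq0 hD sqr_ge0.
have h4 : la ^+ 2 = lc ^+ 2 + lb ^+ 2 - 2 * bc by rewrite ha hb hc /bc; crunch.
have m0 : 0 < lb * lc by apply: mulr_gt0.
set m := lb * lc in h1 m0 *.
have h3 : 0 < m + bc.
  rewrite ltNge; apply/negP => hn.
  have : 0 <= (- bc - m) * (m - bc) by apply: mulr_ge0; lra.
  have e : (- bc - m) * (m - bc) = bc ^+ 2 - m ^+ 2 by ring.
  rewrite e h1; lra.
rewrite /m in h3.
rewrite ltNge; apply/negP => hn.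
have : 0 <= (la - (lb + lc)) * (la + lb + lc) by apply: mulr_ge0; lra.
nra.
Qed.

Lemma neq0_mul (k c D : R) : D != 0 -> k != 0 -> c = k -> c * D != 0.
Proof. by move=> hD hk ->; rewrite mulf_neq0. Qed.

Lemma orth_uniq (H H' P Q X : point R) : orthocenter H P Q X ->
  dot (vsub H' P) (vsub X Q) = 0 -> dot (vsub H' Q) (vsub P X) = 0 ->
  orient P Q X != 0 -> H = H'.
Proof.
case=> e1 [e2 _] f1 f2 hO.
have k1 : (H.1 - H'.1) * orient P Q X = (P.2 - X.2) * (dot (vsub H P) (vsub X Q) - dot (vsub H' P) (vsub X Q))
   - (X.2 - Q.2) * (dot (vsub H Q) (vsub P X) - dot (vsub H' Q) (vsub P X)) by crunch.
have k2 : (H.2 - H'.2) * orient P Q X = - (P.1 - X.1) * (dot (vsub H P) (vsub X Q) - dot (vsub H' P) (vsub X Q))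
   + (X.1 - Q.1) * (dot (vsub H Q) (vsub P X) - dot (vsub H' Q) (vsub P X)) by crunch.
rewrite e1 e2 f1 f2 !subrr !mulr0 subrr in k1.
rewrite e1 e2 f1 f2 !subrr !mulr0 addr0 in k2.
move/eqP: k1; rewrite mulf_eq0 (negbTE hO) orbF subr_eq0 => /eqP k1.
move/eqP: k2; rewrite mulf_eq0 (negbTE hO) orbF subr_eq0 => /eqP k2.
by clear -k1 k2; move: H H' k1 k2 => [? ?] [? ?] /= -> ->.
Qed.

Lemma line_perp_uniq (T T' J B C : point R) : orient B C T = 0 -> orient B C T' = 0 ->
  dot (vsub T J) (vsub C B) = 0 -> dot (vsub T' J) (vsub C B) = 0 ->
  dot (vsub C B) (vsub C B) != 0 -> T = T'.
Proof.
move=> e1 f1 e2 f2 hO.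
have k1 : (T.1 - T'.1) * dot (vsub C B) (vsub C B) = (C.1 - B.1) * (dot (vsub T J) (vsub C B) - dot (vsub T' J) (vsub C B))
   - (C.2 - B.2) * (orient B C T - orient B C T') by crunch.
have k2 : (T.2 - T'.2) * dot (vsub C B) (vsub C B) = (C.2 - B.2) * (dot (vsub T J) (vsub C B) - dot (vsub T' J) (vsub C B))
   + (C.1 - B.1) * (orient B C T - orient B C T') by crunch.
rewrite e1 e2 f1 f2 !subrr !mulr0 subrr in k1.
rewrite e1 e2 f1 f2 !subrr !mulr0 addr0 in k2.
move/eqP: k1; rewrite mulf_eq0 (negbTE hO) orbF subr_eq0 => /eqP k1.
move/eqP: k2; rewrite mulf_eq0 (negbTE hO) orbF subr_eq0 => /eqP k2.
by clear -k1 k2; move: T T' k1 k2 => [? ?] [? ?] /= -> ->.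
Qed.

Lemma lines_uniq (H H' P Q U V : point R) : orient P Q H = 0 -> orient P Q H' = 0 ->
  orient U V H = 0 -> orient U V H' = 0 -> cross (vsub Q P) (vsub V U) != 0 -> H = H'.
Proof.
move=> e1 f1 e2 f2 hO.
have k1 : (H.1 - H'.1) * cross (vsub Q P) (vsub V U) = (V.1 - U.1) * (orient P Q H - orient P Q H')
   - (Q.1 - P.1) * (orient U V H - orient U V H') by crunch.
have k2 : (H.2 - H'.2) * cross (vsub Q P) (vsub V U) = (V.2 - U.2) * (orient P Q H - orient P Q H')
   - (Q.2 - P.2) * (orient U V H - orient U V H') by crunch.
rewrite e1 e2 f1 f2 !subrr !mulr0 subrr in k1.
rewrite e1 e2 f1 f2 !subrr !mulr0 subrr in k2.
move/eqP: k1; rewrite mulf_eq0 (negbTE hO) orbF subr_eq0 => /eqP k1.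
move/eqP: k2; rewrite mulf_eq0 (negbTE hO) orbF subr_eq0 => /eqP k2.
by clear -k1 k2; move: H H' k1 k2 => [? ?] [? ?] /= -> ->.
Qed.

Lemma incenter_lens A B C I : triangle A B C -> incenter I A B C ->
  exists la lb lc, lens A B C la lb lc /\
    I = comb A B C (lb / (la + lb + lc)) (lc / (la + lb + lc)).
Proof.
move=> hT [[s1 [s2 s3]] [r [r0 [t1 [t2 t3]]]]].
have hD : orient A B C != 0 by apply/eqP.
have eBCA : orient B C A = orient A B C by crunch.
have eCAB : orient C A B = orient A B C by crunch.
rewrite eBCA in s2; rewrite eCAB in s3.
have sum : orient B C I + orient C A I + orient A B I = orient A B C by crunch.
have e0 := pt_comb I hD.
move: s1 s2 s3 t1 t2 t3 sum e0 hD.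
set a := orient B C I; set b := orient C A I; set c := orient A B I; set D := orient A B C.
move=> s1 s2 s3 t1 t2 t3 sum e0 hD.
have [rho [erho [ha [hb hc]]]] : exists rho, rho ^+ 2 = r ^+ 2 /\ 0 < a / rho /\ 0 < b / rho /\ 0 < c / rho.
  case: (ltP 0 D) => hD0.
    exists r; split => //.
    by split; [|split]; apply: divr_gt0 => //; nra.
  have hDn : D < 0 by rewrite lt_neqAle hD0 andbT.
  exists (- r); split; first by rewrite sqrrN.
  by split; [|split]; rewrite invrN mulrN -mulNr; apply: divr_gt0 => //; nra.
have rho0 : rho != 0 by apply/eqP => h; move: ha; rewrite h invr0 mulr0 ltxx.
have r0' : r != 0 by rewrite gt_eqF.
exists (a / rho), (b / rho), (c / rho); split.
  split => //; split => //; split => //.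
  split; last split.
  - by rewrite expr_div_n t1 erho; field.
  - by rewrite expr_div_n t2 erho; field.
  - by rewrite expr_div_n t3 erho; field.
rewrite e0 -sum; congr comb.
- by field; rewrite rho0 sum hD.
- by field; rewrite rho0 sum hD.
Qed.
Lemma tri3 A B C la lb lc : lens A B C la lb lc -> orient A B C != 0 ->
  [/\ la < lb + lc, lb < lc + la & lc < la + lb].
Proof.
move=> L hD.
have hD' : orient B C A != 0 by rewrite orient_rot.
have hD'' : orient C A B != 0 by rewrite orient_rot orient_rot.
split; first exact: tri_ineq L hD.
  exact: tri_ineq (lens_rot L) hD'.
exact: tri_ineq (lens_rot (lens_rot L)) hD''.
Qed.

Lemma excircle_comb A B C J rJ la lb lc : lens A B C la lb lc -> orient A B C != 0 ->
  excircle_opp J rJ A B C ->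
  J = comb A B C (lb / (lb + lc - la)) (lc / (lb + lc - la)).
Proof.
move=> L hD [r0 [t1 [t2 [t3 sg]]]].
have [ti1 ti2 ti3] := tri3 L hD.
case: L => la0 [lb0 [lc0 [ha [hb hc]]]].
have sum : orient B C J + orient C A J + orient A B J = orient A B C by crunch.
have eACJ : orient A C J = - orient C A J by crunch.
have eCA : dot (vsub C A) (vsub C A) = dot (vsub A C) (vsub A C) by crunch.
rewrite [orient B C A]orient_rot in sg.
have e0 := pt_comb J hD.
move: t1 t2 t3 sg sum e0 hD; rewrite /tangent_line eACJ eCA sqrrN -ha -hb -hc.
set p := orient B C J; set q := orient C A J; set w := orient A B J; set D := orient A B C.
move=> t1 t2 t3 sg sum e0 hD.
rewrite -exprMn in t1; rewrite -exprMn in t2; rewrite -exprMn in t3.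
move/eqP: t1; rewrite eqf_sqr => /orP[] /eqP ep;
move/eqP: t3; rewrite eqf_sqr => /orP[] /eqP eqq;
move/eqP: t2; rewrite eqf_sqr => /orP[] /eqP ew;
rewrite {1}e0 -sum; rewrite -sum in sg; rewrite ep eqq ew in sg *;
have p1 : 0 < rJ * la by apply: mulr_gt0.
all: try (exfalso; nra).
all: have n1 : rJ != 0 by rewrite gt_eqF.
all: have n2 : lb + lc - la != 0 by rewrite gt_eqF // subr_gt0.
all: by congr comb; field; rewrite n2 /=; apply/negP => /eqP h; rewrite h mulr0 ltxx in sg.
Qed.
Lemma touch_comb A B C T J la lb lc : lens A B C la lb lc -> orient A B C != 0 ->
  J = comb A B C (lb / (lb + lc - la)) (lc / (lb + lc - la)) -> touch_point T J B C ->
  T = comb A B C (1 - (la + lb - lc) / (2 * la)) ((la + lb - lc) / (2 * la)).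
Proof.
move=> L hD eJ [on perp].
have [ti1 ti2 ti3] := tri3 L hD.
have L' := L; case: L' => la0 [lb0 [lc0 [ha [hb hc]]]].
have n1 : la != 0 by rewrite gt_eqF.
have n2 : lb + lc - la != 0 by rewrite gt_eqF // subr_gt0.
apply: (line_perp_uniq on _ perp).
- have := @orient3 A B C 1 0 0 1 (1 - (la + lb - lc) / (2 * la)) ((la + lb - lc) / (2 * la)).
  rewrite combB combC => ->; ring.
- rewrite eJ.
  have := @gramL A B C la lb lc (1 - (la + lb - lc) / (2 * la)) ((la + lb - lc) / (2 * la))
     (lb / (lb + lc - la)) (lc / (lb + lc - la)) 0 1 1 0 L.
  by rewrite combB combC => ->; field; rewrite n1 n2.
- by rewrite -ha expf_neq0.
Qed.
End H.

Unset Implicit Arguments.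

Theorem proposition4p1 (R : realFieldType)
    (A B C I HA HB HC JA JB JC TA TB TC Na : point R) (rA rB rC : R) :
  triangle A B C ->
  incenter I A B C ->
  orthocenter HA B I C ->
  orthocenter HB C I A ->
  orthocenter HC A I B ->
  excircle_opp JA rA A B C -> touch_point TA JA B C ->
  excircle_opp JB rB B C A -> touch_point TB JB C A ->
  excircle_opp JC rC C A B -> touch_point TC JC A B ->
  on_line Na A TA -> on_line Na B TB -> on_line Na C TC ->
  orthocenter Na A HB HC /\ orthocenter Na B HC HA /\ orthocenter Na C HA HB.
Proof.
move=> hT hI hHA hHB hHC hJA hTA hJB hTB _ _ hNA hNB _.
have hD : orient A B C != 0 by apply/eqP.
have hD' : orient B C A != 0 by rewrite orient_rot.
have [la [lb [lc [L eI]]]] := incenter_lens hT hI.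
have [ti1 ti2 ti3] := tri3 L hD.
have L' := L; case: L' => la0 [lb0 [lc0 [ha [hb hc]]]].
have na : la != 0 by rewrite gt_eqF.
have nb : lb != 0 by rewrite gt_eqF.
have nc : lc != 0 by rewrite gt_eqF.
have ns : la + lb + lc != 0 by rewrite gt_eqF // !addr_gt0.
have n1 : lb + lc - la != 0 by rewrite gt_eqF // subr_gt0.
have n2 : la + lc - lb != 0 by rewrite gt_eqF // subr_gt0 addrC.
have n3 : la + lb - lc != 0 by rewrite gt_eqF // subr_gt0.
have eJA := excircle_comb L hD hJA.
have eTA := touch_comb L hD eJA hTA.
have eJB := excircle_comb (lens_rot L) hD' hJB.
have eTB := touch_comb (lens_rot L) hD' eJB hTB.
rewrite comb_rot in eTB.
have eHA : HA = comb A B C ((lc - la) / (lb + lc - la)) ((lb - la) / (lb + lc - la)).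
  apply: (orth_uniq hHA).
  - rewrite eI.
    have := @gramL _ A B C la lb lc ((lc - la) / (lb + lc - la)) ((lb - la) / (lb + lc - la))
      1 0 0 1 (lb / (la + lb + lc)) (lc / (la + lb + lc)) L.
    by rewrite combB combC => ->; field; rewrite ?n1 ?ns.
  - rewrite eI.
    have := @gramL _ A B C la lb lc ((lc - la) / (lb + lc - la)) ((lb - la) / (lb + lc - la))
      (lb / (la + lb + lc)) (lc / (la + lb + lc)) 1 0 0 1 L.
    by rewrite combB combC => ->; field; rewrite ?n1 ?ns.
  - rewrite eI.
    have := @orient3 _ A B C 1 0 (lb / (la + lb + lc)) (lc / (la + lb + lc)) 0 1.
    rewrite combB combC => ->; apply: (neq0_mul (k := - (la / (la + lb + lc)))) => //.
      by rewrite oppr_eq0 mulf_neq0 // invr_neq0.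
    by field.
have eHB : HB = comb A B C (lb / (la + lc - lb)) ((la - lb) / (la + lc - lb)).
  apply: (orth_uniq hHB).
  - rewrite eI.
    have := @gramL _ A B C la lb lc (lb / (la + lc - lb)) ((la - lb) / (la + lc - lb))
      0 1 0 0 (lb / (la + lb + lc)) (lc / (la + lb + lc)) L.
    by rewrite combA combC => ->; field; rewrite ?n2 ?ns.
  - rewrite eI.
    have := @gramL _ A B C la lb lc (lb / (la + lc - lb)) ((la - lb) / (la + lc - lb))
      (lb / (la + lb + lc)) (lc / (la + lb + lc)) 0 1 0 0 L.
    by rewrite combA combC => ->; field; rewrite ?n2 ?ns.
  - rewrite eI.
    have := @orient3 _ A B C 0 1 (lb / (la + lb + lc)) (lc / (la + lb + lc)) 0 0.
    rewrite combA combC => ->; apply: (neq0_mul (k := - (lb / (la + lb + lc)))) => //.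
      by rewrite oppr_eq0 mulf_neq0 // invr_neq0.
    by field.
have eHC : HC = comb A B C ((la - lc) / (la + lb - lc)) (lc / (la + lb - lc)).
  apply: (orth_uniq hHC).
  - rewrite eI.
    have := @gramL _ A B C la lb lc ((la - lc) / (la + lb - lc)) (lc / (la + lb - lc))
      0 0 1 0 (lb / (la + lb + lc)) (lc / (la + lb + lc)) L.
    by rewrite combA combB => ->; field; rewrite ?n3 ?ns.
  - rewrite eI.
    have := @gramL _ A B C la lb lc ((la - lc) / (la + lb - lc)) (lc / (la + lb - lc))
      (lb / (la + lb + lc)) (lc / (la + lb + lc)) 0 0 1 0 L.
    by rewrite combA combB => ->; field; rewrite ?n3 ?ns.
  - rewrite eI.
    have := @orient3 _ A B C 0 0 (lb / (la + lb + lc)) (lc / (la + lb + lc)) 1 0.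
    rewrite combA combB => ->; apply: (neq0_mul (k := - (lc / (la + lb + lc)))) => //.
      by rewrite oppr_eq0 mulf_neq0 // invr_neq0.
    by field.
have eN : Na = comb A B C ((la + lc - lb) / (la + lb + lc)) ((la + lb - lc) / (la + lb + lc)).
  apply: (lines_uniq hNA _ hNB).
  - rewrite eTA.
    have := @orient3 _ A B C 0 0 (1 - (la + lb - lc) / (2 * la)) ((la + lb - lc) / (2 * la)) ((la + lc - lb) / (la + lb + lc)) ((la + lb - lc) / (la + lb + lc)).
    by rewrite combA => ->; apply/eqP; rewrite mulf_eq0; apply/orP; left; apply/eqP; field; rewrite ?na ?ns.
  - rewrite eTB.
    have := @orient3 _ A B C 1 0 (1 - (1 - (lb + lc - la) / (2 * lb)) - (lb + lc - la) / (2 * lb)) (1 - (lb + lc - la) / (2 * lb)) ((la + lc - lb) / (la + lb + lc)) ((la + lb - lc) / (la + lb + lc)).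
    by rewrite combB => ->; apply/eqP; rewrite mulf_eq0; apply/orP; left; apply/eqP; field; rewrite ?nb ?ns.
  - rewrite eTA eTB.
    have := @cross4 _ A B C (1 - (la + lb - lc) / (2 * la)) ((la + lb - lc) / (2 * la)) 0 0 (1 - (1 - (lb + lc - la) / (2 * lb)) - (lb + lc - la) / (2 * lb)) (1 - (lb + lc - la) / (2 * lb)) 1 0.
    rewrite combA combB => ->.
    apply: (neq0_mul (k := ((la - lb + lc) / (2 * la)) * ((la + lb - lc) / (2 * lb)) + (la + lb - lc) / (2 * la))) => //.
      have q1 : 0 < la - lb + lc by lra.
      have q2 : 0 < la + lb - lc by lra.
      have two : 0 < 2 :> R by rewrite ltr0n.
      have d1 : 0 < (la - lb + lc) / (2 * la) by rewrite divr_gt0 // mulr_gt0.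
      have d2 : 0 < (la + lb - lc) / (2 * lb) by rewrite divr_gt0 // mulr_gt0.
      have d3 : 0 < (la + lb - lc) / (2 * la) by rewrite divr_gt0 // mulr_gt0.
      by rewrite gt_eqF // addr_gt0 // mulr_gt0.
    by field; rewrite ?na ?nb.
have O1 : orthocenter (comb A B C ((la + lc - lb) / (la + lb + lc)) ((la + lb - lc) / (la + lb + lc))) (comb A B C 0 0) (comb A B C (lb / (la + lc - lb)) ((la - lb) / (la + lc - lb))) (comb A B C ((la - lc) / (la + lb - lc)) (lc / (la + lb - lc))).
  rewrite /orthocenter !(@gramL _ A B C la lb lc _ _ _ _ _ _ _ _ L).
  by split; [|split]; field; rewrite ?n1 ?n2 ?n3 ?ns.
have O2 : orthocenter (comb A B C ((la + lc - lb) / (la + lb + lc)) ((la + lb - lc) / (la + lb + lc))) (comb A B C 1 0) (comb A B C ((la - lc) / (la + lb - lc)) (lc / (la + lb - lc))) (comb A B C ((lc - la) / (lb + lc - la)) ((lb - la) / (lb + lc - la))).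
  rewrite /orthocenter !(@gramL _ A B C la lb lc _ _ _ _ _ _ _ _ L).
  by split; [|split]; field; rewrite ?n1 ?n2 ?n3 ?ns.
have O3 : orthocenter (comb A B C ((la + lc - lb) / (la + lb + lc)) ((la + lb - lc) / (la + lb + lc))) (comb A B C 0 1) (comb A B C ((lc - la) / (lb + lc - la)) ((lb - la) / (lb + lc - la))) (comb A B C (lb / (la + lc - lb)) ((la - lb) / (la + lc - lb))).
  rewrite /orthocenter !(@gramL _ A B C la lb lc _ _ _ _ _ _ _ _ L).
  by split; [|split]; field; rewrite ?n1 ?n2 ?n3 ?ns.
rewrite combA -eN -eHB -eHC in O1.
rewrite combB -eN -eHA -eHC in O2.
rewrite combC -eN -eHA -eHB in O3.
by split; [|split].
Qed.
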